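(* Let $R$ be a $*$-reducing ring and let $p,q\in R$ be projections. Then the following are equivalent: (1) $(1-p)(1-q)$ is MP invertible; (2) $1-p-q$ is MP invertible; (3) $pq$ is MP invertible.
   Context: $R$ is an associative ring with identity $1$ and an involution $a\mapsto a^*$ (satisfying $(a^* )^*=a$, $(a+b)^*=a^*+b^*$, $(ab)^*=b^*a^*$). $R$ is $*$-reducing if $a^*a=0$ implies $a=0$ for all $a\in R$. An element $a$ is MP invertible if there is $b$ with $aba=a$, $bab=b$, $(ab)^*=ab$, $(ba)^*=ba$. A projection is an element $p$ with $p^2=p=p^*$. *)

(* Defs.v *)
From HB Require Import structures.
From mathcomp Require Import all_boot all_algebra.
Set Implicit Arguments. Unset Strict Implicit. Unset Printing Implicit Defensive.
Import GRing.Theory.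
Local Open Scope ring_scope.

Definition is_involution (R : pzRingType) (star : R -> R) : Prop :=
  [/\ forall a, star (star a) = a,
      forall a b, star (a + b) = star a + star b &
      forall a b, star (a * b) = star b * star a].

Definition star_reducing (R : pzRingType) (star : R -> R) : Prop :=
  forall a : R, star a * a = 0 -> a = 0.

Definition MP_invertible (R : pzRingType) (star : R -> R) (a : R) : Prop :=
  exists b : R, [/\ a * b * a = a, b * a * b = b,
                    star (a * b) = a * b & star (b * a) = b * a].

Definition projection (R : pzRingType) (star : R -> R) (p : R) : Prop :=
  p * p = p /\ star p = p.

(* Main.v *)
Require Import Defs.
From mathcomp Require Import all_boot all_algebra.
Import GRing.Theory.
Local Open Scope ring_scope.

Section S.
Variables (R : pzRingType) (star : R -> R) (Hinv : is_involution star).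

Lemma starK a : star (star a) = a. Proof. by case: Hinv. Qed.
Lemma starD a b : star (a + b) = star a + star b. Proof. by case: Hinv. Qed.
Lemma starM a b : star (a * b) = star b * star a. Proof. by case: Hinv. Qed.
Lemma star0 : star 0 = 0.
Proof. by apply: (@addrI _ (star 0)); rewrite -starD !addr0. Qed.
Lemma starN a : star (- a) = - star a.
Proof. by apply: (@addIr _ (star a)); rewrite -starD !addNr star0. Qed.
Lemma starB a b : star (a - b) = star a - star b.
Proof. by rewrite starD starN. Qed.
Lemma star1 : star 1 = 1.
Proof. by have := starM (star 1) 1; rewrite mulr1 !starK mulr1. Qed.

Lemma MP_opp a : MP_invertible star a -> MP_invertible star (- a).
Proof.
case=> b [h1 h2 h3 h4]; exists (- b).
by rewrite !mulrNN ?mulrN ?mulNr ?opprK h1 h2 h3 h4.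
Qed.

Lemma MP_suff s x y : s = s * star s * x -> s = y * star s * s ->
  MP_invertible star s.
Proof.
move=> hx hy.
have e1 : star x * s * star s = star s.
  by rewrite [in RHS]hx !starM starK mulrA.
have e2 : star s * (s * star y) = star s.
  by rewrite [in RHS]hy !starM starK.
have i1 : star x * s = star s * x.
  by rewrite {1}hx !mulrA e1.
have i2 : s * star y = y * star s.
  by rewrite {1}hy -!mulrA e2.
have j1 : s * star x * s = s.
  by rewrite -mulrA i1 mulrA -hx.
have j2 : s * star y * s = s.
  by rewrite i2 -hy.
have j1' A : A * s * star x * s = A * s.
  by have := congr1 (fun z => A * z) j1; rewrite /= !mulrA.
have j2' A : A * s * star y * s = A * s.
  by have := congr1 (fun z => A * z) j2; rewrite /= !mulrA.
exists (star x * s * star y); split.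
- by rewrite ?mulrA j1 j2.
- by rewrite ?mulrA j2' j1'.
- by rewrite ?mulrA j1 starM starK i2.
- by rewrite ?mulrA j2' starM starK i1.
Qed.

Lemma MP_nec s b : [/\ s * b * s = s, b * s * b = b,
                    star (s * b) = s * b & star (b * s) = b * s] ->
  s = s * star s * star b /\ s = star b * star s * s.
Proof.
case=> h1 h2 h3 h4; split.
- by rewrite -{1}h1 -mulrA -h4 starM mulrA.
- by rewrite -{1}h1 -h3 starM.
Qed.

Variables (p q : R) (hp : p * p = p) (sp : star p = p)
  (hq : q * q = q) (sq : star q = q).

Let a := 1 - p - q.

Lemma sa : star a = a.
Proof. by rewrite /a !starB star1 sp sq. Qed.

Lemma pa : p * a = - (p * q).
Proof. by rewrite /a !mulrBr mulr1 hp subrr sub0r. Qed.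

Lemma aq : a * q = - (p * q).
Proof. by rewrite /a !mulrBl mul1r hq addrAC subrr sub0r. Qed.

Lemma qa : q * a = - (q * p).
Proof. by rewrite /a !mulrBr mulr1 hq addrAC subrr sub0r. Qed.

Lemma ap : a * p = - (q * p).
Proof. by rewrite /a !mulrBl mul1r hp subrr sub0r. Qed.

Lemma aa : a * a = a + p * q + q * p.
Proof.
by rewrite {1}/a !mulrBl mul1r pa qa !opprK.
Qed.

Lemma BtoC : MP_invertible star a -> MP_invertible star (p * q).
Proof.
case=> b H; case: (MP_nec _ _ H) => h1 h2.
rewrite sa in h1 h2.
have pqp : p * q * star (p * q) = p * a * a.
  by rewrite starM sp sq pa mulNr -(mulrA p q a) qa mulrN opprK !mulrA -(mulrA p q q) hq.
have qpq : star (p * q) * (p * q) = a * a * q.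
  by rewrite starM sp sq -(mulrA a a q) aq mulrN (mulrA a p q) ap mulNr opprK !mulrA -(mulrA q p p) hp.
apply: (@MP_suff _ (- star b) (- star b)).
- have h1' : p * a = p * a * a * star b by rewrite {1}h1 !mulrA.
  by rewrite pqp mulrN -h1' pa opprK.
- have h2' : a * q = star b * a * a * q by rewrite {1}h2.
  by rewrite -mulrA qpq mulNr !mulrA -h2' aq opprK.
Qed.
Lemma CtoB : MP_invertible star (p * q) -> MP_invertible star a.
Proof.
case=> t [hs1 hs2 hs3 hs4].
have E1 : t = t * star t * (q * p).
  by rewrite -{1}hs2 -(mulrA t (p*q) t) -hs3 !starM sp sq mulrA.
have tp : t * p = t.
  by rewrite {1}E1 -(mulrA _ (q*p) p) -(mulrA q p p) hp -E1.
have E2 : t = q * p * star t * t.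
  by rewrite -{1}hs2 -hs4 !starM sp sq.
have qt : q * t = t.
  by rewrite {1}E2 !mulrA hq -E2.
have ptq : p * t * q = p * q.
  have : p*q*t*(p*q) = p*t*q.
    by rewrite -(mulrA p q t) qt mulrA -(mulrA p t p) tp.
  by move<-; rewrite hs1.
have pth : star (p * t) = p * t.
  by rewrite -!(mulrA p q t) qt in hs3.
have qpt : q * p * t = q * p.
  have := congr1 star ptq.
  by rewrite (starM (p*t) q) pth sq (starM p q) sp sq mulrA.
have qts : q * star t = t * q.
  have e : t * (p * q) = t * q by rewrite mulrA tp.
  by rewrite e starM sq in hs4.
have pqts : p * q * star t = p * q.
  by rewrite -mulrA qts mulrA ptq.
have pst : p * star t = star t.
  by have := congr1 star tp; rewrite starM sp.
have at1 : a * t = - (p * t).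
  by rewrite /a !mulrBl mul1r qt addrAC subrr sub0r.
have at2 : a * star t = - (q * star t).
  by rewrite /a !mulrBl mul1r pst subrr sub0r.
have at3 : a * (p * t) = - (q * p).
  by rewrite mulrA ap mulNr qpt.
have at4 : a * (t * q) = - (p * q).
  by rewrite /a !mulrBl mul1r !mulrA ptq qt addrAC subrr sub0r.
have at5 : a * (q * star t) = - (p * q).
  by rewrite mulrA aq mulNr pqts.
generalize (aa) at1 at2 at3 at4 at5 (sa) (aq).
generalize a => c caa ct1 ct2 ct3 ct4 ct5 sc cq.
pose b := c + p * t + t * q - t - star t.
have ab : c * b = c + p * t + q * star t.
  by rewrite /b !mulrBr !mulrDr caa ct1 ct2 ct3 ct4 !opprK addrK addrK.
have h : c = c * c * b.
  by rewrite -mulrA ab !mulrDr caa ct3 ct5 addrK addrK.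
apply: (@MP_suff _ b (star b)).
- by rewrite sc.
- by rewrite sc; have := congr1 star h; rewrite sc !starM sc mulrA.
Qed.
End S.
Theorem lemma2p10 (R : pzRingType) (star : R -> R)
  (Hinv : is_involution star) (Hred : star_reducing star)
  (p q : R) (Hp : projection star p) (Hq : projection star q) :
  [<-> MP_invertible star ((1 - p) * (1 - q));
       MP_invertible star (1 - p - q);
       MP_invertible star (p * q)].
Proof.
case: Hp => hp sp; case: Hq => hq sq.
have hp' : (1 - p) * (1 - p) = 1 - p.
  by rewrite mulrBl mul1r mulrBr mulr1 hp subrr subr0.
have hq' : (1 - q) * (1 - q) = 1 - q.
  by rewrite mulrBl mul1r mulrBr mulr1 hq subrr subr0.
have sp' : star (1 - p) = 1 - p by rewrite starB // star1 // sp.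
have sq' : star (1 - q) = 1 - q by rewrite starB // star1 // sq.
have e : 1 - (1 - p) - (1 - q) = - (1 - p - q).
  by rewrite !opprB (addrC 1 (p - 1)) subrK addrCA.
tfae.
- move=> /(@CtoB _ _ Hinv _ _ hp' sp' hq' sq'); rewrite e => /(@MP_opp _ _ _).
  by rewrite opprK.
- exact: (@BtoC _ _ Hinv _ _ hp sp hq sq).
- move=> /(@CtoB _ _ Hinv _ _ hp sp hq sq) /(@MP_opp _ _ _); rewrite -e.
  exact: (@BtoC _ _ Hinv _ _ hp' sp' hq' sq').
Qed.
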